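(* Let $G=(V,E,\sigma)$ be a graph as in the context and $\Gamma$ a nonempty family of walks. Then $$\lim_{p\to\infty}\mathrm{Mod}_p(\Gamma)^{1/p}=\frac{1}{\ell(\Gamma)}=\mathrm{Mod}_\infty(\Gamma).$$ Moreover, for $1\le p<q<\infty$, $$\mathrm{Mod}_q(\Gamma)\le\mathrm{Mod}_p(\Gamma)\quad\text{and}\quad \sigma(E)^{-1/p}\mathrm{Mod}_p(\Gamma)^{1/p}\le\sigma(E)^{-1/q}\mathrm{Mod}_q(\Gamma)^{1/q},$$ where $\sigma(E)=\sum_{e\in E}\sigma(e)$. Consequently $\sigma(E)^{-1/p}\mathrm{Mod}_p(\Gamma)^{1/p}$ increases to $\mathrm{Mod}_\infty(\Gamma)$ as $p\to\infty$.
   Context: Let $G=(V,E,\sigma)$ be a finite simple graph (directed or undirected) with edge weights $\sigma:E\to(0,\infty)$. A walk $\gamma$ is a string of edges $e_1\dots e_r$, $r\ge1$, $e_i=(v_i,v_{i+1})\in E$; graph length $\ell(\gamma)=r$; $\rho$-length $\ell_\rho(\gamma)=\sum_i\rho(e_i)$; $\ell(\Gamma)=\inf_{\gamma\in\Gamma}\ell(\gamma)$. $A(\Gamma)=\{\rho:E\to\mathbb{R}:\rho\ge0,\ \ell_\rho(\gamma)\ge1\ \forall\gamma\in\Gamma\}$. For $1\le p<\infty$, $\mathcal{E}_p(\rho)=\sum_e\sigma(e)|\rho(e)|^p$; $\mathcal{E}_\infty(\rho)=\max_e|\rho(e)|$. $\mathrm{Mod}_p(\Gamma)=\inf_{\rho\in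 A(\Gamma)}\mathcal{E}_p(\rho)$ for $1\le p\le\infty$. *)

(* Defs.v *)
From Stdlib Require Import Reals Lra List Classical ClassicalEpsilon.
Import ListNotations.
Open Scope R_scope.

(** Infimum of a set of reals (classical); 0 if no infimum exists. *)
Definition is_inf (S : R -> Prop) (m : R) : Prop :=
  (forall x, S x -> m <= x) /\ (forall b, (forall x, S x -> b <= x) -> b <= m).

Definition Inf (S : R -> Prop) : R :=
  match excluded_middle_informative (exists m, is_inf S m) with
  | left h => proj1_sig (constructive_indefinite_description _ h)
  | right _ => 0
  end.

(** x^p for x >= 0 and real p > 0, with the convention 0^p = 0
    (Stdlib's Rpower 0 p = 1, so we guard it). *)
Definition rpow (x p : R) : R :=
  if Req_EM_T x 0 then 0 else Rpower x p.

Definition simple_graph (directed : bool) {V : Type} (E : list (V * V)) : Prop :=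
  NoDup E /\ (forall u v, In (u, v) E -> u <> v) /\
  (directed = false -> forall u v, In (u, v) E -> ~ In (v, u) E).

Definition traverses (directed : bool) {V : Type} (e : V * V) (v w : V) : Prop :=
  e = (v, w) \/ (directed = false /\ e = (w, v)).

Fixpoint walk_from (directed : bool) {V : Type} (E : list (V * V)) (v : V)
  (g : list (V * V)) : Prop :=
  match g with
  | [] => True
  | e :: t => exists w, In e E /\ traverses directed e v w /\ walk_from directed E w t
  end.

Definition is_walk (directed : bool) {V : Type} (E : list (V * V)) (g : list (V * V)) : Prop :=
  g <> [] /\ exists v, walk_from directed E v g.

Definition rho_length {V : Type} (rho : V * V -> R) (g : list (V * V)) : R :=
  fold_right (fun e acc => rho e + acc) 0 g.

Definition ell {V : Type} (Gamma : list (V * V) -> Prop) : R :=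
  Inf (fun x => exists g, Gamma g /\ x = INR (length g)).

Definition admissible {V : Type} (E : list (V * V)) (Gamma : list (V * V) -> Prop)
  (rho : V * V -> R) : Prop :=
  (forall e, In e E -> 0 <= rho e) /\ (forall g, Gamma g -> 1 <= rho_length rho g).

Definition energy_p {V : Type} (E : list (V * V)) (sigma : V * V -> R) (p : R)
  (rho : V * V -> R) : R :=
  fold_right (fun e acc => sigma e * rpow (Rabs (rho e)) p + acc) 0 E.

Definition energy_inf {V : Type} (E : list (V * V)) (rho : V * V -> R) : R :=
  fold_right (fun e acc => Rmax (Rabs (rho e)) acc) 0 E.

Definition Mod_p {V : Type} (E : list (V * V)) (sigma : V * V -> R) (p : R)
  (Gamma : list (V * V) -> Prop) : R :=
  Inf (fun m => exists rho, admissible E Gamma rho /\ m = energy_p E sigma p rho).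

Definition Mod_inf {V : Type} (E : list (V * V)) (Gamma : list (V * V) -> Prop) : R :=
  Inf (fun m => exists rho, admissible E Gamma rho /\ m = energy_inf E rho).

Definition sigma_total {V : Type} (E : list (V * V)) (sigma : V * V -> R) : R :=
  fold_right (fun e acc => sigma e + acc) 0 E.

Definition lim_infty (f : R -> R) (L : R) : Prop :=
  forall eps, 0 < eps -> exists P, forall p, P <= p -> Rabs (f p - L) < eps.

(* Main.v *)
Require Import Defs.
From Stdlib Require Import Reals List Lra Lia Classical ClassicalEpsilon.
Import ListNotations.
Open Scope R_scope.

Lemma exp_le_mono x y : x <= y -> exp x <= exp y.
Proof. intros [H|H]; [left; now apply exp_increasing | subst; lra]. Qed.

Lemma Rpower_pos x y : 0 < Rpower x y.
Proof. unfold Rpower; apply exp_pos. Qed.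

Lemma Rpower_1_l y : Rpower 1 y = 1.
Proof. unfold Rpower; rewrite ln_1, Rmult_0_r; apply exp_0. Qed.

Lemma ln_le0 x : 0 < x -> x <= 1 -> ln x <= 0.
Proof. intros H [H1|H1]; [left; rewrite <- ln_1; now apply ln_increasing | subst; rewrite ln_1; lra]. Qed.

Lemma ln_ge0 x : 1 <= x -> 0 <= ln x.
Proof. intros [H1|H1]; [left; rewrite <- ln_1; apply ln_increasing; lra | subst; rewrite ln_1; lra]. Qed.

Lemma Rpower_ge1 c a : 1 <= c -> 0 <= a -> 1 <= Rpower c a.
Proof. intros. rewrite <- (Rpower_1_l a). apply Rle_Rpower_l; lra. Qed.

Lemma Rpower_le1 c a : 0 < c -> c <= 1 -> 0 <= a -> Rpower c a <= 1.
Proof. intros. rewrite <- (Rpower_1_l a). apply Rle_Rpower_l; lra. Qed.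

Lemma Rmult_le_0_r_ok a b : a <= 0 -> 0 <= b -> a * b <= 0.
Proof. intros; nra. Qed.

Lemma bern s r : 0 < s -> 1 <= r -> 1 + r * (s - 1) <= Rpower s r.
Proof.
  intros Hs Hr.
  set (f := fun x => Rpower x r - r * x).
  set (f' := fun x => r * Rpower x (r - 1) - r * 1).
  assert (Hd : forall c, 0 < c -> derivable_pt_lim f c (f' c)).
  { intros c Hc. unfold f, f'.
    apply (derivable_pt_lim_minus (fun x => Rpower x r) (fun x => r * x)).
    - now apply derivable_pt_lim_power.
    - apply (derivable_pt_lim_scal id r c 1). apply derivable_pt_lim_id. }
  assert (Hf1 : f 1 = 1 - r). { unfold f; rewrite Rpower_1_l; ring. }
  destruct (Rtotal_order s 1) as [Hlt|[Heq|Hgt]].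
  - destruct (MVT_cor2 f f' s 1 Hlt) as [c [Hc1 Hc2]].
    { intros c Hc; apply Hd; lra. }
    assert (Rpower c (r - 1) <= 1) by (apply Rpower_le1; lra).
    assert (f' c <= 0). { unfold f'. assert (0 <= r) by lra.
      assert (r * Rpower c (r - 1) <= r * 1) by (apply Rmult_le_compat_l; lra). lra. }
    assert (f' c * (1 - s) <= 0) by (apply Rmult_le_0_r_ok; lra).
    unfold f in Hc1, Hf1. lra.
  - subst. rewrite Rpower_1_l. lra.
  - destruct (MVT_cor2 f f' 1 s Hgt) as [c [Hc1 Hc2]].
    { intros c Hc; apply Hd; lra. }
    assert (1 <= Rpower c (r - 1)) by (apply Rpower_ge1; lra).
    assert (0 <= f' c). { unfold f'. assert (0 <= r) by lra.
      assert (r * 1 <= r * Rpower c (r - 1)) by (apply Rmult_le_compat_l; lra). lra. }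
    assert (0 <= f' c * (s - 1)) by (apply Rmult_le_pos; lra).
    unfold f in Hc1, Hf1. lra.
Qed.

Lemma rpow_nonneg x p : 0 <= rpow x p.
Proof. unfold rpow; destruct Req_EM_T; [lra | left; apply Rpower_pos]. Qed.

Lemma rpow_pos_eq x p : x <> 0 -> rpow x p = Rpower x p.
Proof. unfold rpow; destruct Req_EM_T; [contradiction | reflexivity]. Qed.

Lemma rpow_0 p : rpow 0 p = 0.
Proof. unfold rpow; destruct Req_EM_T; [reflexivity | lra]. Qed.

Lemma rpow_gt0 x p : 0 < x -> 0 < rpow x p.
Proof. intros; rewrite rpow_pos_eq by lra; apply Rpower_pos. Qed.

Lemma rpow_le_base x y p : 0 <= x <= y -> 0 <= p -> rpow x p <= rpow y p.
Proof.
  intros [[Hx|Hx] Hxy] Hp.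
  - rewrite !rpow_pos_eq by lra. apply Rle_Rpower_l; lra.
  - subst; rewrite rpow_0; apply rpow_nonneg.
Qed.

Lemma rpow_le_exp x p q : 0 <= x <= 1 -> p <= q -> rpow x q <= rpow x p.
Proof.
  intros [[Hx|Hx] H1] Hpq.
  - rewrite !rpow_pos_eq by lra. unfold Rpower. apply exp_le_mono.
    assert (ln x <= 0) by (apply ln_le0; lra). nra.
  - subst; rewrite !rpow_0; lra.
Qed.

Lemma rpow_rpow x p r : 0 <= x -> rpow (rpow x p) r = rpow x (p * r).
Proof.
  intros [Hx|Hx].
  - rewrite (rpow_pos_eq x p) by lra. rewrite rpow_pos_eq by (apply Rgt_not_eq, Rpower_pos).
    rewrite rpow_pos_eq by lra. apply Rpower_mult.
  - subst; rewrite !rpow_0; reflexivity.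
Qed.

Lemma tangent y m r : 0 <= y -> 0 < m -> 1 <= r ->
  Rpower m r * (1 - r) + r * (Rpower m r / m) * y <= rpow y r.
Proof.
  intros [Hy|Hy] Hm Hr.
  - rewrite rpow_pos_eq by lra.
    replace y with (m * (y / m)) at 2 by (field; lra).
    rewrite <- Rpower_mult_distr by (try apply Rdiv_lt_0_compat; lra).
    pose proof (bern (y / m) r ltac:(apply Rdiv_lt_0_compat; lra) Hr).
    pose proof (Rpower_pos m r).
    assert (Rpower m r * (1 + r * (y / m - 1)) <= Rpower m r * Rpower (y / m) r)
      by (apply Rmult_le_compat_l; lra).
    replace (Rpower m r * (1 - r) + r * (Rpower m r / m) * y) with
      (Rpower m r * (1 + r * (y / m - 1))) by (field; lra). lra.
  - subst. rewrite rpow_0. pose proof (Rpower_pos m r).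
    replace (Rpower m r * (1 - r) + r * (Rpower m r / m) * 0) with (Rpower m r * (1 - r)) by (field; lra).
    assert (0 <= Rpower m r * (r - 1)) by (apply Rmult_le_pos; lra). lra.
Qed.

Definition sumf {A : Type} (E : list A) (f : A -> R) : R :=
  fold_right (fun e acc => f e + acc) 0 E.

Lemma sumf_le {A} (E : list A) f g : (forall e, In e E -> f e <= g e) -> sumf E f <= sumf E g.
Proof.
  induction E as [|a E IH]; simpl; intros H; [lra|].
  pose proof (H a (or_introl eq_refl)). assert (sumf E f <= sumf E g) by (apply IH; auto). lra.
Qed.

Lemma sumf_ext {A} (E : list A) f g : (forall e, In e E -> f e = g e) -> sumf E f = sumf E g.
Proof.
  induction E as [|a E IH]; simpl; intros H; [lra|].
  rewrite (H a (or_introl eq_refl)), IH; auto.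
Qed.

Lemma sumf_lin {A} (E : list A) f g a b :
  sumf E (fun e => a * f e + b * g e) = a * sumf E f + b * sumf E g.
Proof. induction E as [|x E IH]; simpl; [ring|]. rewrite IH; ring. Qed.

Lemma sumf_nonneg {A} (E : list A) f : (forall e, In e E -> 0 <= f e) -> 0 <= sumf E f.
Proof.
  induction E as [|a E IH]; simpl; intros H; [lra|].
  pose proof (H a (or_introl eq_refl)). assert (0 <= sumf E f) by (apply IH; auto). lra.
Qed.

Lemma sumf_term {A} (E : list A) f e : (forall e, In e E -> 0 <= f e) -> In e E -> f e <= sumf E f.
Proof.
  induction E as [|a E IH]; simpl; intros H Hin; [contradiction|].
  destruct Hin as [<-|Hin].
  - assert (0 <= sumf E f) by (apply sumf_nonneg; auto). lra.
  - pose proof (H a (or_introl eq_refl)). assert (f e <= sumf E f) by (apply IH; auto). lra.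
Qed.

Lemma jensen {T} (E : list T) (w y : T -> R) r :
  (forall e, In e E -> 0 < w e) -> (forall e, In e E -> 0 <= y e) -> 1 <= r ->
  0 < sumf E (fun e => w e * y e) ->
  sumf E w * Rpower (sumf E (fun e => w e * y e) / sumf E w) r
    <= sumf E (fun e => w e * rpow (y e) r).
Proof.
  intros Hw Hy Hr HA.
  set (W := sumf E w) in *. set (A := sumf E (fun e => w e * y e)) in *.
  assert (HW : 0 < W).
  { destruct E as [|a E']. { unfold A in HA; simpl in HA; lra. }
    pose proof (sumf_term (a :: E') w a ltac:(intros; left; auto) (or_introl eq_refl)).
    pose proof (Hw a (or_introl eq_refl)). unfold W; lra. }
  set (m := A / W). assert (Hm : 0 < m) by (apply Rdiv_lt_0_compat; lra).
  set (K := Rpower m r).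
  assert (H1 : sumf E (fun e => w e * (K * (1 - r) + r * (K / m) * y e))
     <= sumf E (fun e => w e * rpow (y e) r)).
  { apply sumf_le. intros e He. apply Rmult_le_compat_l. left; auto. apply tangent; auto. }
  replace (sumf E (fun e => w e * (K * (1 - r) + r * (K / m) * y e))) with
    (sumf E (fun e => (K * (1 - r)) * w e + (r * (K / m)) * (w e * y e))) in H1
    by (apply sumf_ext; intros; ring).
  rewrite sumf_lin in H1. fold W A in H1.
  replace (K * (1 - r) * W + r * (K / m) * A) with (W * K) in H1 by (unfold m; field; lra).
  exact H1.
Qed.

Lemma inf_unique S a b : is_inf S a -> is_inf S b -> a = b.
Proof. intros [Ha1 Ha2] [Hb1 Hb2]. apply Rle_antisym; [apply Hb2 | apply Ha2]; auto. Qed.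

Lemma Inf_eq S m : is_inf S m -> Inf S = m.
Proof.
  intros H. unfold Inf. destruct excluded_middle_informative as [h|h].
  - destruct (constructive_indefinite_description _ h) as [x Hx]; simpl.
    eapply inf_unique; eauto.
  - exfalso; apply h; eauto.
Qed.

Lemma inf_exists S b : (exists x, S x) -> (forall x, S x -> b <= x) -> exists m, is_inf S m.
Proof.
  intros [x0 Hx0] Hb.
  destruct (completeness (fun y => S (- y))) as [l [Hl1 Hl2]].
  { exists (- b). intros y Hy. specialize (Hb _ Hy). lra. }
  { exists (- x0). rewrite Ropp_involutive; auto. }
  exists (- l). split.
  - intros x Hx. assert (- x <= l) by (apply Hl1; rewrite Ropp_involutive; auto). lra.
  - intros b' Hb'. assert (l <= - b').
    { apply Hl2. intros y Hy. specialize (Hb' _ Hy). lra. } lra.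
Qed.

Lemma Inf_spec S b : (exists x, S x) -> (forall x, S x -> b <= x) -> is_inf S (Inf S).
Proof. intros H1 H2. destruct (inf_exists S b H1 H2) as [m Hm]. rewrite (Inf_eq S m Hm); auto. Qed.

Lemma walk_from_edges d {V} (E : list (V * V)) g : forall v, walk_from d E v g -> forall e, In e g -> In e E.
Proof.
  induction g as [|a g IH]; simpl; intros v H e He; [contradiction|].
  destruct H as [w [Ha [_ Hw]]]. destruct He as [<-|He]; auto. eapply IH; eauto.
Qed.

Lemma walk_edges d {V} (E : list (V * V)) g : is_walk d E g -> forall e, In e g -> In e E.
Proof. intros [_ [v Hv]]. eapply walk_from_edges; eauto. Qed.

Lemma least_nat (P : nat -> Prop) n : P n -> exists m, P m /\ forall k, P k -> (m <= k)%nat.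
Proof.
  induction n as [n IH] using (well_founded_induction Wf_nat.lt_wf). intros Hn.
  destruct (classic (exists k, (k < n)%nat /\ P k)) as [[k [Hk1 Hk2]]|Hno].
  - eapply IH; eauto.
  - exists n; split; auto. intros k Hk. destruct (Nat.lt_ge_cases k n); auto.
    exfalso; apply Hno; eauto.
Qed.

Lemma ell_min d {V} (E : list (V * V)) (Gamma : list (V * V) -> Prop) :
  (forall g, Gamma g -> is_walk d E g) -> (exists g, Gamma g) ->
  exists g0, Gamma g0 /\ ell Gamma = INR (length g0) /\ (1 <= length g0)%nat /\
     forall g, Gamma g -> (length g0 <= length g)%nat.
Proof.
  intros Hw [g Hg].
  destruct (least_nat (fun n => exists g, Gamma g /\ length g = n) (length g) (ex_intro _ g (conj Hg eq_refl)))
    as [m [[g0 [Hg0 Hl]] Hmin]].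
  exists g0. split; auto. split; [|split].
  - unfold ell. apply Inf_eq. split.
    + intros x [g1 [Hg1 ->]]. apply le_INR. rewrite Hl. apply Hmin; eauto.
    + intros b Hb. apply Hb; eauto.
  - destruct (Hw g0 Hg0) as [Hne _]. destruct g0; [congruence | simpl; lia].
  - intros g1 Hg1. rewrite Hl. apply Hmin; eauto.
Qed.

Lemma big_edge {V} (rho : V * V -> R) g : g <> [] ->
  exists e, In e g /\ rho_length rho g <= INR (length g) * rho e.
Proof.
  induction g as [|a t IH]; intros Hne; [congruence|].
  destruct t as [|b t'].
  - exists a; simpl; split; auto. lra.
  - destruct (IH ltac:(discriminate)) as [e [He Hle]].
    change (rho_length rho (a :: b :: t')) with (rho a + rho_length rho (b :: t')).
    change (length (a :: b :: t')) with (S (length (b :: t'))). rewrite S_INR.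
    set (n := INR (length (b :: t'))) in *.
    assert (0 <= n) by apply pos_INR.
    destruct (Rle_dec (rho a) (rho e)).
    + exists e; split; [right; auto|]. nra.
    + exists a; split; [left; auto|]. nra.
Qed.

Lemma Rpower_inv_base x a : 0 < x -> Rpower (/ x) a = Rpower x (- a).
Proof. intros; unfold Rpower; rewrite ln_Rinv by lra; f_equal; ring. Qed.

Lemma lim_Rpower_1 c : 0 < c -> lim_infty (fun p => Rpower c (1 / p)) 1.
Proof.
  intros Hc eps Heps.
  pose proof (derivable_continuous_pt exp 0 (derivable_pt_exp 0)) as Hcont.
  destruct (Hcont eps Heps) as [d [Hd Hdd]].
  exists (Rmax 1 (2 * Rabs (ln c) / d + 1)). intros p Hp.
  assert (Hp1 : 1 <= p) by (eapply Rle_trans; [apply Rmax_l|exact Hp]).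
  assert (Hp2 : 2 * Rabs (ln c) / d + 1 <= p) by (eapply Rle_trans; [apply Rmax_r|exact Hp]).
  unfold Rpower. rewrite <- exp_0 at 2.
  destruct (Req_dec (1 / p * ln c) 0) as [H0|H0].
  - rewrite H0, Rminus_diag, Rabs_R0; lra.
  - apply (Hdd (1 / p * ln c)). split; [split; [exact I| auto]|].
    change (Rabs (1 / p * ln c - 0) < d). replace (1 / p * ln c - 0) with (1 / p * ln c) by ring. rewrite Rabs_mult.
    rewrite Rabs_right by (left; apply Rdiv_lt_0_compat; lra).
    assert (Habs : 0 <= Rabs (ln c)) by apply Rabs_pos.
    assert (2 * Rabs (ln c) / d * d = 2 * Rabs (ln c)) by (field; lra).
    assert (Rabs (ln c) < d * p) by nra.
    apply (Rmult_lt_reg_l p); [lra|]. replace (p * (1 / p * Rabs (ln c))) with (Rabs (ln c)) by (field; lra).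
    lra.
Qed.

Lemma lim_scale f a k : lim_infty f a -> lim_infty (fun p => f p * k) (a * k).
Proof.
  intros H eps Heps.
  destruct (H (eps / (Rabs k + 1))) as [P HP].
  { apply Rdiv_lt_0_compat; [lra|]. pose proof (Rabs_pos k); lra. }
  exists P; intros p Hp. specialize (HP p Hp).
  replace (f p * k - a * k) with ((f p - a) * k) by ring. rewrite Rabs_mult.
  pose proof (Rabs_pos k). pose proof (Rabs_pos (f p - a)).
  assert (Rabs (f p - a) * (Rabs k + 1) < eps).
  { apply (Rmult_lt_compat_r (Rabs k + 1)) in HP; [|lra].
    replace (eps / (Rabs k + 1) * (Rabs k + 1)) with eps in HP by (field; lra). exact HP. }
  nra.
Qed.

Lemma lim_sandwich lo hi f a P0 : lim_infty lo a -> lim_infty hi a ->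
  (forall p, P0 <= p -> lo p <= f p <= hi p) -> lim_infty f a.
Proof.
  intros Hl Hh Hb eps Heps.
  destruct (Hl eps Heps) as [P1 H1]. destruct (Hh eps Heps) as [P2 H2].
  exists (Rmax P0 (Rmax P1 P2)). intros p Hp.
  pose proof (Rmax_l P0 (Rmax P1 P2)). pose proof (Rmax_r P0 (Rmax P1 P2)).
  pose proof (Rmax_l P1 P2). pose proof (Rmax_r P1 P2).
  specialize (H1 p ltac:(lra)). specialize (H2 p ltac:(lra)). specialize (Hb p ltac:(lra)).
  apply Rabs_def2 in H1. apply Rabs_def2 in H2. apply Rabs_def1; lra.
Qed.

Definition smin {T} (E : list T) (sigma : T -> R) : R :=
  fold_right (fun e acc => Rmin (sigma e) acc) 1 E.

Lemma smin_pos {T} (E : list T) sigma : (forall e, In e E -> 0 < sigma e) -> 0 < smin E sigma.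
Proof.
  induction E as [|a E IH]; simpl; intros H; [lra|].
  apply Rmin_glb_lt; auto.
Qed.

Lemma smin_le {T} (E : list T) sigma e : In e E -> smin E sigma <= sigma e.
Proof.
  induction E as [|a E IH]; simpl; intros H; [contradiction|].
  destruct H as [<-|H]; [apply Rmin_l|]. eapply Rle_trans; [apply Rmin_r|auto].
Qed.

Lemma rho_length_const {V} (c : R) (g : list (V * V)) : rho_length (fun _ => c) g = INR (length g) * c.
Proof. induction g as [|a g IH]; [simpl; ring|]. change (c + rho_length (fun _ => c) g = INR (S (length g)) * c). rewrite IH, S_INR. ring. Qed.

Lemma rho_length_min {V} (rho : V * V -> R) g : (forall e, In e g -> 0 <= rho e) ->
  Rmin (rho_length rho g) 1 <= rho_length (fun e => Rmin (rho e) 1) g.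
Proof.
  induction g as [|a g IH]; simpl; intros H.
  - apply Rmin_l.
  - pose proof (H a (or_introl eq_refl)). assert (IH' := IH (fun e He => H e (or_intror He))).
    assert (0 <= rho_length (fun e => Rmin (rho e) 1) g).
    { clear IH IH'. induction g as [|b g IHg]; simpl; [lra|].
      pose proof (H b (or_intror (or_introl eq_refl))).
      assert (0 <= Rmin (rho b) 1) by (apply Rmin_glb; lra).
      assert (0 <= rho_length (fun e => Rmin (rho e) 1) g).
      { apply IHg. intros e [He|He]; [subst; auto| apply H; right; right; auto]. }
      lra. }
    unfold Rmin in *. repeat destruct Rle_dec; lra.
Qed.

Lemma energy_inf_ge {V} (E : list (V * V)) rho e : In e E -> Rabs (rho e) <= energy_inf E rho.
Proof.
  induction E as [|a E IH]; simpl; intros H; [contradiction|].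
  destruct H as [<-|H]; [apply Rmax_l|]. eapply Rle_trans; [apply IH; auto|apply Rmax_r].
Qed.

Lemma energy_inf_const_le {V} (E : list (V * V)) c : 0 <= c -> energy_inf E (fun _ => c) <= c.
Proof.
  induction E as [|a E IH]; simpl; intros H; [lra|].
  apply Rmax_lub; [rewrite Rabs_right; lra | auto].
Qed.

Lemma sumf_scale {A} (E : list A) f k : sumf E (fun e => f e * k) = sumf E f * k.
Proof. induction E as [|a E IH]; simpl; [ring|]. rewrite IH; ring. Qed.

Lemma pw_comp k a p : 0 < k -> 0 < a -> 0 < p -> Rpower (k * Rpower a p) (1 / p) = Rpower k (1 / p) * a.
Proof.
  intros. rewrite <- Rpower_mult_distr by (auto; apply Rpower_pos).
  rewrite Rpower_mult. replace (p * (1 / p)) with 1 by (field; lra). rewrite Rpower_1; auto.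
Qed.

Theorem mainTheorem8 (directed : bool) (V : Type) (E : list (V * V))
  (sigma : V * V -> R) (Gamma : list (V * V) -> Prop)
  (HG : simple_graph directed E)
  (Hsigma : forall e, In e E -> 0 < sigma e)
  (Hwalks : forall g, Gamma g -> is_walk directed E g)
  (Hne : exists g, Gamma g) :
  lim_infty (fun p => rpow (Mod_p E sigma p Gamma) (1 / p)) (1 / ell Gamma) /\
  1 / ell Gamma = Mod_inf E Gamma /\
  (forall p q, 1 <= p -> p < q ->
     Mod_p E sigma q Gamma <= Mod_p E sigma p Gamma /\
     Rpower (sigma_total E sigma) (- (1 / p)) * rpow (Mod_p E sigma p Gamma) (1 / p)
     <= Rpower (sigma_total E sigma) (- (1 / q)) * rpow (Mod_p E sigma q Gamma) (1 / q)) /\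
  lim_infty (fun p => Rpower (sigma_total E sigma) (- (1 / p)) * rpow (Mod_p E sigma p Gamma) (1 / p))
    (Mod_inf E Gamma).
Proof.
  destruct (ell_min directed E Gamma Hwalks Hne) as [g0 [Hg0 [HL [Hlen Hmin]]]].
  rewrite HL. set (L := INR (length g0)) in *.
  assert (HL1 : 1 <= L) by (unfold L; change 1 with (INR 1); apply le_INR; auto).
  assert (HLi : 0 < 1 / L) by (apply Rdiv_lt_0_compat; lra).
  assert (Hedge : forall rho, admissible E Gamma rho -> exists e, In e E /\ 1 / L <= rho e).
  { intros rho [Hr1 Hr2].
    destruct (big_edge rho g0) as [e [He Hle]]. { apply (Hwalks _ Hg0). }
    exists e. split. { eapply walk_edges; eauto. }
    specialize (Hr2 _ Hg0). fold L in Hle.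
    assert (1 / L * L = 1) by (field; lra). nra. }
  assert (Hadm0 : admissible E Gamma (fun _ => 1 / L)).
  { split. { intros; lra. }
    intros g Hg. rewrite rho_length_const.
    assert (L <= INR (length g)) by (apply le_INR; auto).
    assert (1 / L * L = 1) by (field; lra). nra. }
  assert (HEne : exists e0, In e0 E).
  { destruct g0 as [|e0 t] eqn:Eg. { simpl in Hlen; lia. }
    exists e0. eapply (walk_edges directed E (e0 :: t)); [apply Hwalks; auto | left; auto]. }
  set (W := sigma_total E sigma).
  assert (HWs : W = sumf E sigma) by reflexivity.
  assert (HW : 0 < W).
  { destruct HEne as [e0 He0]. rewrite HWs.
    pose proof (sumf_term E sigma e0 (fun e He => Rlt_le _ _ (Hsigma e He)) He0).
    pose proof (Hsigma e0 He0). lra. }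
  set (sm := smin E sigma).
  assert (Hsm : 0 < sm) by (apply smin_pos; auto).
  assert (HEp : forall p rho, energy_p E sigma p rho = sumf E (fun e => sigma e * rpow (Rabs (rho e)) p))
    by reflexivity.
  set (ES := fun p m => exists rho, admissible E Gamma rho /\ m = energy_p E sigma p rho).
  assert (Hmod : forall p, is_inf (ES p) (Mod_p E sigma p Gamma)).
  { intros p. apply (Inf_spec _ 0).
    - exists (energy_p E sigma p (fun _ => 1 / L)); exists (fun _ => 1 / L); auto.
    - intros x [rho [_ ->]]. rewrite HEp. apply sumf_nonneg. intros e He.
      apply Rmult_le_pos; [left; auto | apply rpow_nonneg]. }
  assert (Hlo : forall p, 0 < p -> sm * Rpower (1 / L) p <= Mod_p E sigma p Gamma).
  { intros p Hp. apply (proj2 (Hmod p)). intros x [rho [Hrho ->]].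
    destruct (Hedge rho Hrho) as [e [He Hle]]. rewrite HEp.
    eapply Rle_trans; [| apply sumf_term; [|exact He]].
    - apply Rmult_le_compat; [lra | left; apply Rpower_pos | apply smin_le; auto |].
      rewrite <- (rpow_pos_eq (1 / L)) by lra. apply rpow_le_base; [|lra].
      rewrite Rabs_right; lra.
    - intros e' He'. apply Rmult_le_pos; [left; auto | apply rpow_nonneg]. }
  assert (Hhi : forall p, Mod_p E sigma p Gamma <= W * Rpower (1 / L) p).
  { intros p. eapply Rle_trans. { apply (proj1 (Hmod p)). exists (fun _ => 1 / L); split; eauto. }
    rewrite HEp, HWs. rewrite (Rabs_right (1 / L)) by lra. rewrite rpow_pos_eq by lra.
    rewrite <- sumf_scale. lra. }
  assert (Hpos : forall p, 0 < p -> 0 < Mod_p E sigma p Gamma).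
  { intros p Hp. eapply Rlt_le_trans; [|apply Hlo; auto].
    apply Rmult_lt_0_compat; auto; apply Rpower_pos. }
  assert (Hb1 : forall p, 1 <= p ->
    Rpower sm (1 / p) * (1 / L) <= rpow (Mod_p E sigma p Gamma) (1 / p) <= Rpower W (1 / p) * (1 / L)).
  { intros p Hp. rewrite rpow_pos_eq by (apply Rgt_not_eq, Hpos; lra).
    rewrite <- (pw_comp sm (1 / L) p), <- (pw_comp W (1 / L) p) by lra.
    assert (0 < 1 / p) by (apply Rdiv_lt_0_compat; lra).
    split; apply Rle_Rpower_l; try lra; split.
    - apply Rmult_lt_0_compat; auto; apply Rpower_pos.
    - apply Hlo; lra.
    - apply Hpos; lra.
    - apply Hhi. }
  assert (Hmi : 1 / L = Mod_inf E Gamma).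
  { symmetry. unfold Mod_inf. apply Inf_eq. split.
    - intros x [rho [Hrho ->]]. destruct (Hedge rho Hrho) as [e [He Hle]].
      eapply Rle_trans; [|apply energy_inf_ge; exact He]. eapply Rle_trans; [exact Hle| apply Rle_abs].
    - intros b Hb. eapply Rle_trans; [apply Hb; exists (fun _ => 1 / L); split; eauto|].
      apply energy_inf_const_le; lra. }
  split; [|split; [exact Hmi|split]].
  -
    apply (lim_sandwich (fun p => Rpower sm (1 / p) * (1 / L)) (fun p => Rpower W (1 / p) * (1 / L)) _ _ 1).
    + pose proof (lim_scale _ _ (1 / L) (lim_Rpower_1 sm Hsm)) as H; rewrite Rmult_1_l in H; exact H.
    + pose proof (lim_scale _ _ (1 / L) (lim_Rpower_1 W HW)) as H; rewrite Rmult_1_l in H; exact H.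
    + exact Hb1.
  - intros p q Hp Hpq.
    assert (Hq : 1 < q) by lra.
    split.
    + apply (proj2 (Hmod p)). intros x [rho [Hrho ->]].
      set (rho' := fun e => Rmin (rho e) 1).
      assert (Hadm' : admissible E Gamma rho').
      { destruct Hrho as [Hr1 Hr2]. split.
        - intros e He. unfold rho'. apply Rmin_glb; [auto|lra].
        - intros g Hg. eapply Rle_trans; [|apply rho_length_min].
          + apply Rmin_glb; [apply Hr2; auto | lra].
          + intros e He. apply Hr1. eapply walk_edges; eauto. }
      eapply Rle_trans. { apply (proj1 (Hmod q)). exists rho'; split; eauto. }
      rewrite !HEp. apply sumf_le. intros e He. apply Rmult_le_compat_l; [left; auto|].
      destruct Hrho as [Hr1 _]. pose proof (Hr1 e He).
      unfold rho'. assert (0 <= Rmin (rho e) 1) by (apply Rmin_glb; lra).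
      rewrite (Rabs_right (Rmin _ _)) by lra. rewrite (Rabs_right (rho e)) by lra.
      eapply Rle_trans; [apply rpow_le_exp; [split; [lra|apply Rmin_r] | left; exact Hpq]|].
      apply rpow_le_base; [split; [lra|apply Rmin_l] | lra].
    + set (r := q / p). assert (Hr : 1 <= r).
      { unfold r. apply (Rmult_le_reg_l p); [lra|]. replace (p * (q / p)) with q by (field; lra). lra. }
      set (Mp := Mod_p E sigma p Gamma). set (Mq := Mod_p E sigma q Gamma).
      assert (HMp : 0 < Mp) by (apply Hpos; lra). assert (HMq : 0 < Mq) by (apply Hpos; lra).
      assert (Hlb : W * Rpower (Mp / W) r <= Mq).
      { apply (proj2 (Hmod q)). intros x [rho [Hrho ->]].
        set (y := fun e => rpow (Rabs (rho e)) p).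
        assert (HA : Mp <= sumf E (fun e => sigma e * y e)).
        { unfold y; rewrite <- HEp. apply (proj1 (Hmod p)). exists rho; split; auto. }
        pose proof (jensen E sigma y r Hsigma (fun e _ => rpow_nonneg _ _) Hr ltac:(lra)) as HJ.
        rewrite <- HWs in HJ.
        replace (sumf E (fun e => sigma e * rpow (y e) r)) with (energy_p E sigma q rho) in HJ.
        2:{ rewrite HEp. apply sumf_ext. intros e He. unfold y. rewrite rpow_rpow by apply Rabs_pos.
            unfold r. replace (p * (q / p)) with q by (field; lra). reflexivity. }
        eapply Rle_trans; [|exact HJ]. apply Rmult_le_compat_l; [lra|].
        apply Rle_Rpower_l; [lra|]. split; [apply Rdiv_lt_0_compat; lra|].
        unfold Rdiv. apply Rmult_le_compat_r; [left; apply Rinv_0_lt_compat; lra | exact HA]. }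
      rewrite !rpow_pos_eq by lra.
      assert (Hq' : 0 < 1 / q) by (apply Rdiv_lt_0_compat; lra).
      assert (H1 : Rpower (W * Rpower (Mp / W) r) (1 / q) <= Rpower Mq (1 / q)).
      { apply Rle_Rpower_l; [lra|]. split; [apply Rmult_lt_0_compat; [lra|apply Rpower_pos]|exact Hlb]. }
      rewrite <- Rpower_mult_distr in H1 by (try lra; apply Rpower_pos).
      rewrite Rpower_mult in H1. replace (r * (1 / q)) with (1 / p) in H1 by (unfold r; field; lra).
      assert (Hsplit : Rpower (Mp / W) (1 / p) = Rpower Mp (1 / p) * Rpower W (- (1 / p))).
      { rewrite <- Rpower_inv_base by lra. symmetry. apply Rpower_mult_distr; [lra | apply Rinv_0_lt_compat; lra]. }
      rewrite Hsplit in H1.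
      assert (HWq : Rpower W (- (1 / q)) * Rpower W (1 / q) = 1).
      { rewrite <- Rpower_plus. replace (- (1 / q) + 1 / q) with 0 by ring. apply Rpower_O; lra. }
      pose proof (Rpower_pos W (- (1 / q))).
      apply (Rmult_le_compat_l (Rpower W (- (1 / q)))) in H1; [|lra].
      replace (Rpower W (- (1 / q)) * (Rpower W (1 / q) * (Rpower Mp (1 / p) * Rpower W (- (1 / p)))))
        with ((Rpower W (- (1 / q)) * Rpower W (1 / q)) * (Rpower W (- (1 / p)) * Rpower Mp (1 / p))) in H1 by ring.
      rewrite HWq, Rmult_1_l in H1. exact H1.
  - rewrite <- Hmi.
    apply (lim_sandwich (fun p => Rpower (/ W * sm) (1 / p) * (1 / L)) (fun _ => 1 / L) _ _ 1).
    + pose proof (lim_scale _ _ (1 / L) (lim_Rpower_1 (/ W * sm) ltac:(apply Rmult_lt_0_compat; [apply Rinv_0_lt_compat|]; lra))) as H.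
      rewrite Rmult_1_l in H; exact H.
    + intros eps Heps. exists 0. intros. rewrite Rminus_diag, Rabs_R0; lra.
    + intros p Hp. specialize (Hb1 p Hp). pose proof (Rpower_pos W (- (1 / p))) as Hw.
      destruct Hb1 as [Hb1 Hb2].
      apply (Rmult_le_compat_l (Rpower W (- (1 / p)))) in Hb1; [|lra].
      apply (Rmult_le_compat_l (Rpower W (- (1 / p)))) in Hb2; [|lra].
      split.
      * rewrite <- Rpower_mult_distr by (try lra; apply Rinv_0_lt_compat; lra).
        rewrite Rpower_inv_base by lra. rewrite Rmult_assoc. exact Hb1.
      * eapply Rle_trans; [exact Hb2|].
        rewrite <- Rmult_assoc, <- Rpower_plus. replace (- (1 / p) + 1 / p) with 0 by ring.
        rewrite Rpower_O by lra. lra.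
Qed.
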